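(* Let $\mathcal N_1$ be the network with nodes $\sigma_1,\sigma_2,v,\rho$, source set $S=\{\sigma_1,\sigma_2\}$, sink $\rho$, and five edges: two parallel edges from $\sigma_1$ to $v$, one edge from $\sigma_2$ to $v$, one edge from $\sigma_2$ to $\rho$, and one edge from $v$ to $\rho$. Let $f(m_1,m_2)=m_1+m_2$ over $\mathbb F_2$. Then $\widehat{\mathcal C}(\mathcal N_1,f,1)=1=\min_{i}\mathrm{mincut}(\sigma_i,\rho)$; in particular there is an admissible $(1,1)$ secure network code for $(\mathcal N_1,f,1)$.
   Context: $\mathrm{mincut}(u,v)$ is the minimum size of an edge set whose deletion leaves no path from node $u$ to node $v$. For a nonnegative integer $r$, $\mathcal W_r=\{W\subseteq\mathcal E:|W|\le r\}$. Secure model for a network $\mathcal N=(\mathcal G,S,\rho)$ ($\mathcal G=(\mathcal V,\mathcal E)$ directed acyclic, sources without input edges, sink without output edges), $q$ a prime power, $f=\sum_i m_i$ over $\mathbb F_q$, each edge carrying one symbol of $\mathbb F_q$ per use: an $(\ell,n)$ secure network code has source messages $\mathbf M_i\in\mathbb F_q^\ell$ (i.i.d. uniform entries) and keys $\mathbf K_i$ uniform on finite sets $\mathcal K_i$, all mutually independent; each edge out of $\sigma_i$ carries a function of $(\mathbf M_i,\mathbf K_i)$ in $\mathbb F_q^n$, every other edge carries a function in $\mathbb F_q^n$ of the messages on the input edges of its tail; a decoder at $\rho$ maps the incoming messages to $\mathbb F_q^\ell$. Admissible (for security level $r$): decoder outputs $\sum_i\mathbf m_i$ for all messages and keys, and $I(\mathbf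 Y_W;\mathbf M_S)=0$ for all $W\in\mathcal W_r$ ($\mathbf Y_W$ the messages on edges of $W$, $\mathbf M_S=(\mathbf M_1,\dots,\mathbf M_s)$). Rate $\ell/n$; $R$ achievable if for all $\epsilon>0$ some admissible code has rate $>R-\epsilon$; $\widehat{\mathcal C}(\mathcal N,f,r)$ is the maximum achievable rate. *)

(* Defs.v *)
From Stdlib Require Import Rdefinitions Rpower.
From HB Require Import structures.
From mathcomp Require Import all_boot all_order all_algebra.
From mathcomp Require Import Rstruct.
Set Implicit Arguments. Unset Strict Implicit. Unset Printing Implicit Defensive.
Import Order.TTheory GRing.Theory Num.Theory.
Local Open Scope ring_scope.

Definition avoid_rel (N E : finType) (tl hd : E -> N) (A : {set E}) : rel N :=
  fun x y => [exists e, [&& e \notin A, tl e == x & hd e == y]].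

Definition reach_avoid (N E : finType) (tl hd : E -> N) (A : {set E}) (u v : N) :=
  connect (avoid_rel tl hd A) u v.

(* mincut(u,v): minimum size of an edge set whose deletion leaves no path
   from u to v (the default #|E| is never the unique candidate issue when
   u <> v, since deleting all edges disconnects u from v). *)
Definition mincut (N E : finType) (tl hd : E -> N) (u v : N) : nat :=
  \big[minn/#|E|]_(A : {set E} | ~~ reach_avoid tl hd A u v) #|A|.

Definition N1node := 'I_4.
Definition sigma1 : N1node := @Ordinal 4 0 isT.
Definition sigma2 : N1node := @Ordinal 4 1 isT.
Definition vnode  : N1node := @Ordinal 4 2 isT.
Definition rho    : N1node := @Ordinal 4 3 isT.

(* edges e1,e2 : sigma1 -> v ; e3 : sigma2 -> v ; e4 : sigma2 -> rho ;
   e5 : v -> rho *)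
Definition N1edge := 'I_5.
Definition N1tail (e : N1edge) : N1node :=
  nth rho [:: sigma1; sigma1; sigma2; sigma2; vnode] e.
Definition N1head (e : N1edge) : N1node :=
  nth rho [:: vnode; vnode; vnode; rho; rho] e.

Definition uprob (O : finType) (P : pred O) : R :=
  #|[set w | P w]|%:R / #|O|%:R.

Definition mutual_info (O A B : finType) (X : O -> A) (Y : O -> B) : R :=
  \sum_(a : A) \sum_(b : B)
    let pab := uprob (fun w => (X w == a) && (Y w == b)) in
    let pa := uprob (fun w => X w == a) in
    let pb := uprob (fun w => Y w == b) in
    if pab == 0 then 0 else pab * ln (pab / (pa * pb)).

Definition F := 'F_2.

(* The local encoding functions follow the topology of N1:
   edges out of sigma1 (e1,e2) are functions of (M1,K1), edges out of
   sigma2 (e3,e4) are functions of (M2,K2), edge e5 out of v is a function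
   of the messages on the input edges e1,e2,e3 of v, and the decoder at rho
   is a function of the messages on its input edges e4,e5. *)
Record N1code (l n : nat) (K1 K2 : finType) := N1Code {
  enc1 : 'rV[F]_l -> K1 -> 'rV[F]_n;
  enc2 : 'rV[F]_l -> K1 -> 'rV[F]_n;
  enc3 : 'rV[F]_l -> K2 -> 'rV[F]_n;
  enc4 : 'rV[F]_l -> K2 -> 'rV[F]_n;
  enc5 : 'rV[F]_n -> 'rV[F]_n -> 'rV[F]_n -> 'rV[F]_n;
  dec  : 'rV[F]_n -> 'rV[F]_n -> 'rV[F]_l }.

(* sample space: (M1, M2, K1, K2), all uniform and independent,
   i.e. the uniform distribution on the product *)
Definition omega (l : nat) (K1 K2 : finType) :=
  ('rV[F]_l * 'rV[F]_l * K1 * K2)%type.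

Definition edge_msg l n K1 K2 (C : N1code l n K1 K2)
    (w : omega l K1 K2) (e : N1edge) : 'rV[F]_n :=
  let: (m1, m2, k1, k2) := w in
  let y1 := enc1 C m1 k1 in
  let y2 := enc2 C m1 k1 in
  let y3 := enc3 C m2 k2 in
  let y4 := enc4 C m2 k2 in
  let y5 := enc5 C y1 y2 y3 in
  nth 0 [:: y1; y2; y3; y4; y5] e.

Definition Y_W l n K1 K2 (C : N1code l n K1 K2) (W : {set N1edge})
    (w : omega l K1 K2) : {ffun N1edge -> 'rV[F]_n} :=
  [ffun e => if e \in W then edge_msg C w e else 0].

Definition M_S l K1 K2 (w : omega l K1 K2) : 'rV[F]_l * 'rV[F]_l :=
  let: (m1, m2, _, _) := w in (m1, m2).

Definition admissible l n K1 K2 (r : nat) (C : N1code l n K1 K2) : Prop :=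
  (forall m1 m2 k1 k2,
      dec C (edge_msg C (m1, m2, k1, k2) (@Ordinal 5 3 isT))
            (edge_msg C (m1, m2, k1, k2) (@Ordinal 5 4 isT)) = m1 + m2)
  /\ (forall W : {set N1edge}, (#|W| <= r)%N ->
        mutual_info (Y_W C W) (@M_S l K1 K2) = 0).

Definition exists_admissible_code (l n r : nat) : Prop :=
  exists (K1 K2 : finType), (0 < #|K1|)%N /\ (0 < #|K2|)%N /\
    exists C : N1code l n K1 K2, admissible r C.

Definition achievable (r : nat) (Rt : R) : Prop :=
  forall eps : R, 0 < eps ->
    exists l n : nat, (0 < n)%N /\ exists_admissible_code l n r /\
      Rt - eps < l%:R / n%:R.

Definition is_secure_capacity (r : nat) (Cap : R) : Prop :=
  achievable r Cap /\ forall Rt, achievable r Rt -> Rt <= Cap.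

(* Main.v *)
Require Import Defs.
From Stdlib Require Rdefinitions Rpower.
Local Notation R := Rdefinitions.R.
From HB Require Import structures.
From mathcomp Require Import all_boot all_order all_algebra.
From mathcomp Require Import Rstruct zify lra.
Set Implicit Arguments. Unset Strict Implicit. Unset Printing Implicit Defensive.
Import Order.TTheory GRing.Theory Num.Theory.
Definition e5 : N1edge := @Ordinal 5 4 isT.

Lemma step x y : avoid_rel N1tail N1head [set e5] x y ->
  (x == sigma1) || (x == vnode) -> (y == sigma1) || (y == vnode).
Proof.
case/existsP => -[[|[|[|[|[|i]]]]] Hi] //=; rewrite ?inE /=;
  try (case/andP => /eqP <- /eqP <-) => //.
all: by [].
Qed.

Lemma noreach : ~~ reach_avoid N1tail N1head [set e5] sigma1 rho.
Proof.
apply/negP => /connectP [p Hp E].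
suff H : forall x q, (x == sigma1) || (x == vnode) ->
  path (avoid_rel N1tail N1head [set e5]) x q -> (last x q == sigma1) || (last x q == vnode).
  by move: (H sigma1 p isT Hp); rewrite -E.
move=> x q; elim: q x => [|y q IH] x Hx //=.
case/andP => Hxy Hq. exact: (IH y (step Hxy Hx) Hq).
Qed.

Lemma reach1 : reach_avoid N1tail N1head set0 sigma1 rho.
Proof.
apply: (connect_trans (y:=vnode)); apply: connect1; apply/existsP.
  by exists (@Ordinal 5 0 isT); rewrite inE.
by exists (@Ordinal 5 4 isT); rewrite inE.
Qed.
Lemma reach2 : reach_avoid N1tail N1head set0 sigma2 rho.
Proof.
apply: connect1; apply/existsP.
by exists (@Ordinal 5 3 isT); rewrite inE.
Qed.

Lemma mincut_ge1 u : reach_avoid N1tail N1head set0 u rho ->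
  (1 <= mincut N1tail N1head u rho)%N.
Proof.
move=> H; rewrite /mincut; apply: (big_ind (fun x => 1 <= x)%N); first by rewrite card_ord.
  by move=> a b; rewrite leq_min => -> ->.
move=> A HA; rewrite card_gt0; apply/negP => /eqP E; rewrite E in HA.
by rewrite H in HA.
Qed.

Lemma bigmin_le (T : eqType) (s : seq T) (P : pred T) (F : T -> nat) x j :
  j \in s -> P j -> (\big[minn/x]_(i <- s | P i) F i <= F j)%N.
Proof.
elim: s => [|y s IH] //; rewrite inE big_cons => /orP [/eqP <- ->|Hj Pj].
  by rewrite geq_minl.
case: (P y); last exact: IH.
by rewrite geq_min IH ?orbT.
Qed.

Lemma mincut1 : minn (mincut N1tail N1head sigma1 rho) (mincut N1tail N1head sigma2 rho) = 1%N.
Proof.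
apply/eqP; rewrite eqn_leq leq_min !mincut_ge1 ?reach1 ?reach2 // andbT.
rewrite geq_min.
rewrite /mincut; have H := (@bigmin_le _ _ (fun A => ~~ reach_avoid N1tail N1head A sigma1 rho) (fun A : {set N1edge} => #|A|) #|N1edge| _ (mem_index_enum [set e5]) noreach).
by rewrite cards1 in H; rewrite H.
Qed.

Local Open Scope ring_scope.

Lemma RdivE (x y : R) : Rdefinitions.Rdiv x y = x * y^-1.
Proof. by []. Qed.

Lemma mi0 (O A B : finType) (X : O -> A) (Y : O -> B) :
  (forall a b, uprob (fun w => (X w == a) && (Y w == b)) =
     uprob (fun w => X w == a) * uprob (fun w => Y w == b)) ->
  mutual_info X Y = 0.
Proof.
move=> H; rewrite /mutual_info big1 // => a _; rewrite big1 // => b _ /=.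
rewrite H; case: eqP => // Hne.
rewrite RdivE mulfV; last by apply/eqP.
rewrite Rpower.ln_1.
by rewrite mulr0.
Qed.

Lemma card_sum (O : finType) (P : pred O) :
  #|[set w | P w]| = (\sum_(w : O) (P w : nat))%N.
Proof.
rewrite -sum1_card big_mkcond /=; apply: eq_bigr => w _; rewrite inE; by case: (P w).
Qed.

Lemma uprob_indep (O : finType) (P Q : pred O) :
  (#|[set w | P w && Q w]| * #|O| = #|[set w | P w]| * #|[set w | Q w]|)%N ->
  uprob (fun w => P w && Q w) = uprob P * uprob Q.
Proof.
move=> H; rewrite /uprob !RdivE.
have [n0|npos] := posnP #|O|.
  by rewrite n0 mulr0n invr0 !mulr0.
have nz : (#|O|%:R : R) != 0 by rewrite pnatr_eq0 -lt0n.
have -> : (#|[set w | P w && Q w]|%:R : R) =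
   #|[set w | P w]|%:R * #|[set w | Q w]|%:R * (#|O|%:R)^-1.
  by rewrite -natrM -H natrM mulfK.
by rewrite mulrACA mulrA.
Qed.

Notation V := 'rV[F]_1.

Lemma sumO (K1 K2 : finType) (f : omega 1 K1 K2 -> nat) :
  (\sum_(w : omega 1 K1 K2) f w =
   \sum_(m : V * V) \sum_(k : K1 * K2) f (m.1, m.2, k.1, k.2))%N.
Proof.
symmetry.
transitivity (\sum_(m : V * V) \sum_(k1 : K1) \sum_(k2 : K2) f (m.1, m.2, k1, k2))%N.
  by apply: eq_bigr => m _; rewrite pair_bigA.
rewrite pair_bigA pair_bigA; apply: eq_bigr => -[[[m1 m2] k1] k2] _ //.
Qed.

Lemma count_indep (K1 K2 A : finType) (X : omega 1 K1 K2 -> A) (m0 : V * V) :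
  (forall m : V * V, exists g : K1 * K2 -> K1 * K2, injective g /\
     forall k : K1 * K2, X (m.1, m.2, k.1, k.2) = X (m0.1, m0.2, (g k).1, (g k).2)) ->
  forall a b,
  (#|[set w | (X w == a) && (@M_S 1 K1 K2 w == b)]| * #|{: omega 1 K1 K2}| =
   #|[set w | X w == a]| * #|[set w | @M_S 1 K1 K2 w == b]|)%N.
Proof.
move=> Hg a b.
pose N (m : V * V) := (\sum_(k : K1 * K2) (X (m.1, m.2, k.1, k.2) == a : nat))%N.
have HN : forall m, N m = N m0.
  move=> m; have [g [ig Hk]] := Hg m; rewrite /N [in RHS](reindex_inj ig) /=.
  by apply: eq_bigr => k _; rewrite Hk.
rewrite !card_sum !sumO.
have -> : (\sum_(m : V * V) \sum_(k : K1 * K2)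
   ((X (m.1, m.2, k.1, k.2) == a) && (M_S (m.1, m.2, k.1, k.2) == b) : nat) = N m0)%N.
  rewrite (bigD1 b) //= [X in (_ + X)%N]big1 => [|m /negbTE Hm].
    rewrite addn0 -(HN b); apply: eq_bigr => k _.
    by case: b {HN} => b1 b2 /=; rewrite eqxx andbT.
  apply: big1 => k _; case: m Hm => m1 m2 /= ->; by rewrite andbF.
have -> : (\sum_(m : V * V) \sum_(k : K1 * K2)
   (M_S (m.1, m.2, k.1, k.2) == b : nat) = #|{: K1 * K2}|)%N.
  rewrite (bigD1 b) //= [X in (_ + X)%N]big1 => [|m /negbTE Hm].
    rewrite addn0 -sum1_card; apply: eq_bigr => k _.
    by case: b {HN} => b1 b2 /=; rewrite eqxx.
  apply: big1 => k _; by case: m Hm => m1 m2 /= ->.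
have -> : (\sum_(m : V * V) N m = #|{: V * V}| * N m0)%N.
  by rewrite -sum_nat_const; apply: eq_bigr => m _; rewrite HN.
rewrite !card_prod; lia.
Qed.

Definition C0 : N1code 1 1 V V :=
  @N1Code 1 1 V V (fun m k => k) (fun m k => m + k) (fun m k => m + k) (fun m k => k)
    (fun y1 y2 y3 => y2 - y1 + y3) (fun y4 y5 => y5 - y4).

Definition shift (d : V * V) (k : V * V) : V * V := (k.1 + d.1, k.2 + d.2).

Lemma shift_inj d : injective (shift d).
Proof. by move=> [a b] [a' b'] [/addIr -> /addIr ->]. Qed.

Lemma edge_shift (e : N1edge) (m : V * V) : exists d,
  forall k : V * V, edge_msg C0 (m.1, m.2, k.1, k.2) e =
     edge_msg C0 ((0 : V * V).1, (0 : V * V).2, (shift d k).1, (shift d k).2) e.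
Proof.
case: m => m1 m2; case: e => -[|[|[|[|[|i]]]]] Hi //=.
- by exists 0 => -[k1 k2] /=; rewrite addr0.
- by exists (m1, 0) => -[k1 k2] /=; rewrite add0r addrC.
- by exists (0, m2) => -[k1 k2] /=; rewrite add0r addrC.
- by exists 0 => -[k1 k2] /=; rewrite addr0.
- exists (0, m1 + m2) => -[k1 k2] /=.
  by rewrite !add0r subrr add0r addrK addrA addrC.
Qed.

Lemma C0_secure (W : {set N1edge}) : (#|W| <= 1)%N ->
  mutual_info (Y_W C0 W) (@M_S 1 V V) = 0.
Proof.
move=> HW.
have [e He] : exists e, W \subset [set e].
  case: (set_0Vmem W) => [->|[e eW]]; first by exists ord0; rewrite sub0set.
  exists e; apply/subsetP => x xW; rewrite inE; apply/eqP.
  exact: (card_le1_eqP HW).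
apply: mi0 => a b; apply: uprob_indep.
apply: (count_indep (m0 := 0)) => m.
have [d Hd] := edge_shift e m.
exists (shift d); split; first exact: shift_inj.
move=> k; apply/ffunP => x; rewrite !ffunE.
case: ifP => // xW.
by move/subsetP: He => /(_ x xW); rewrite inE => /eqP ->.
Qed.

Lemma code111 : exists_admissible_code 1 1 1.
Proof.
exists V, V; split; first by apply/card_gt0P; exists 0.
split; first by apply/card_gt0P; exists 0.
exists C0; split; last exact: C0_secure.
move=> m1 m2 k1 k2 /=.
by rewrite addrK addrA addrK.
Qed.

Lemma code_le l n r : exists_admissible_code l n r -> (l <= n)%N.
Proof.
case=> K1 [K2 [/card_gt0P [k1 _] [/card_gt0P [k2 _] [C [Hdec _]]]]].
pose f (m : 'rV[F]_l) := edge_msg C (m, 0, k1, k2) (@Ordinal 5 4 isT).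
have inj : injective f.
  move=> m m' E; have := Hdec m 0 k1 k2; have := Hdec m' 0 k1 k2.
  rewrite !addr0 => <- <-; rewrite /f in E; rewrite E //.
have := leq_card f inj; rewrite !card_mx card_Fp // !mul1n.
by rewrite leq_exp2l.
Qed.

Lemma IZR1 : Rdefinitions.IZR (BinNums.Zpos BinNums.xH) = GRing.one R. Proof. by []. Qed.

Lemma cap11 : is_secure_capacity 1 1.
Proof.
split.
  move=> eps he; exists 1%N, 1%N; split => //; split; first exact: code111.
  rewrite divr1 ?IZR1; lra.
move=> Rt H; rewrite ?IZR1 leNgt; apply/negP => Hlt.
have he : 0 < Rt - 1 by rewrite subr_gt0.
have [l [n [n0 [hc]]]] := H _ he.

have hle : (l%:R : R) <= n%:R by rewrite ler_nat; exact: code_le hc.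
have : (l%:R : R) * (n%:R)^-1 <= 1.
  by rewrite ler_pdivrMr ?mul1r // ltr0n.
lra.
Qed.


Theorem mainTheorem5 :
  is_secure_capacity 1 1
  /\ minn (mincut N1tail N1head sigma1 rho) (mincut N1tail N1head sigma2 rho) = 1%N
  /\ exists_admissible_code 1 1 1.
Proof.
split; first exact: cap11.
split; first exact: mincut1.
exact: code111.
Qed.
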